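(* For every $\to$-formula $H$, $\mathbf{CL7}\vdash H$ if and only if $H$ is a substitutional instance of a binary tautology of classical propositional logic.
   Context: Formulas (''$\to$-formulas'') are built from infinitely many propositional atoms using only the binary connective $\to$. A $\to$-sequent is a pair $\Gamma\Rightarrow F$ where $\Gamma$ is a finite multiset of $\to$-formulas and $F$ is a $\to$-formula. The system $\mathbf{CL7}$ has as axioms all sequents of the form $\Gamma, F\Rightarrow F$ and exactly two inference rules: Right $\to$: from $\Gamma,E\Rightarrow F$ infer $\Gamma\Rightarrow E\to F$; Left $\to$: from $\Gamma,F\Rightarrow G$ and $\Delta\Rightarrow E$ infer $\Gamma,\Delta,E\to F\Rightarrow G$. (There is no contraction rule; this is the implicative fragment of affine logic.) A formula $H$ is provable in $\mathbf{CL7}$ iff the sequent $\Rightarrow H$ (empty antecedent) is derivable. A formula of classical propositional logic is binary if no atom occurs in it more than twice; a tautology is a classically valid formula. A substitutional instance of $F$ is the result of replacing atoms of $F$ by arbitrary formulas, with all occurrences of the same atom replaced by the same formula. *)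

(* Defs.v *)
From Stdlib Require Import List Permutation Bool Arith.
Import ListNotations.

Inductive form : Type :=
| Var : nat -> form
| Imp : form -> form -> form.

(* Multisets of formulas are represented by lists up to Permutation. *)
Inductive CL7 : list form -> form -> Prop :=
| CL7_ax : forall (G G' : list form) (F : form),
    Permutation G' (F :: G) -> CL7 G' F
| CL7_R : forall (G : list form) (E F : form),
    CL7 (E :: G) F -> CL7 G (Imp E F)
| CL7_L : forall (G D S : list form) (E F H : form),
    CL7 (F :: G) H -> CL7 D E ->
    Permutation S (Imp E F :: G ++ D) -> CL7 S H.

Definition provable (H : form) : Prop := CL7 [] H.

Fixpoint eval (v : nat -> bool) (F : form) : bool :=
  match F with
  | Var n => v n
  | Imp A B => implb (eval v A) (eval v B)
  end.

Definition tautology (F : form) : Prop := forall v : nat -> bool, eval v F = true.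

Fixpoint occ (n : nat) (F : form) : nat :=
  match F with
  | Var m => if Nat.eqb n m then 1 else 0
  | Imp A B => occ n A + occ n B
  end.

Definition binary (F : form) : Prop := forall n : nat, occ n F <= 2.

Fixpoint subst (s : nat -> form) (F : form) : form :=
  match F with
  | Var n => s n
  | Imp A B => Imp (subst s A) (subst s B)
  end.

(* Main.v *)
Require Import Defs.
From Stdlib Require Import List Permutation Bool Arith Lia Classical.
Import ListNotations.

Definition ren (r : nat -> nat) (F : form) : form := subst (fun n => Var (r n)) F.
Definition ev (n : nat) := 2 * n.
Definition od (n : nat) := S (2 * n).
Definition join (s1 s2 : nat -> form) (n : nat) : form :=
  if Nat.even n then s1 (Nat.div2 n) else s2 (Nat.div2 n).

Lemma even_ev k : Nat.even (2 * k) = true.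
Proof. rewrite Nat.even_mul. reflexivity. Qed.
Lemma even_od k : Nat.even (S (2 * k)) = false.
Proof. rewrite Nat.even_succ, Nat.odd_mul. reflexivity. Qed.

Lemma join_ev s1 s2 k : join s1 s2 (ev k) = s1 k.
Proof. unfold join, ev. rewrite even_ev, Nat.div2_double. reflexivity. Qed.
Lemma join_od s1 s2 k : join s1 s2 (od k) = s2 k.
Proof. unfold join, od. rewrite even_od, Nat.div2_succ_double. reflexivity. Qed.

Lemma subst_ext s t F : (forall n, s n = t n) -> subst s F = subst t F.
Proof. intro H; induction F; simpl; congruence. Qed.

Lemma subst_ren s r F : subst s (ren r F) = subst (fun n => s (r n)) F.
Proof. unfold ren; induction F; simpl; congruence. Qed.

Lemma subst_join_ev s1 s2 F : subst (join s1 s2) (ren ev F) = subst s1 F.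
Proof. rewrite subst_ren. apply subst_ext. intro; apply join_ev. Qed.
Lemma subst_join_od s1 s2 F : subst (join s1 s2) (ren od F) = subst s2 F.
Proof. rewrite subst_ren. apply subst_ext. intro; apply join_od. Qed.

Lemma map_subst_join_ev s1 s2 l : map (subst (join s1 s2)) (map (ren ev) l) = map (subst s1) l.
Proof. induction l; simpl; [reflexivity|]. rewrite subst_join_ev; congruence. Qed.
Lemma map_subst_join_od s1 s2 l : map (subst (join s1 s2)) (map (ren od) l) = map (subst s2) l.
Proof. induction l; simpl; [reflexivity|]. rewrite subst_join_od; congruence. Qed.

Lemma eval_ren v r F : eval v (ren r F) = eval (fun n => v (r n)) F.
Proof. unfold ren; induction F; simpl; congruence. Qed.

Lemma occ_ev_ev k F : occ (2 * k) (ren ev F) = occ k F.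
Proof. unfold ren; induction F; cbn [occ subst]; [|lia]. unfold ev in *.
  destruct (Nat.eqb_spec (2*k) (2*n)), (Nat.eqb_spec k n); lia. Qed.
Lemma occ_ev_od k F : occ (2 * k) (ren od F) = 0.
Proof. unfold ren; induction F; cbn [occ subst]; [|lia]. unfold od in *.
  destruct (Nat.eqb_spec (2*k) (S (2*n))); lia. Qed.
Lemma occ_od_ev k F : occ (2 * k + 1) (ren ev F) = 0.
Proof. unfold ren; induction F; cbn [occ subst]; [|lia]. unfold ev in *.
  destruct (Nat.eqb_spec (2*k+1) (2*n)); lia. Qed.
Lemma occ_od_od k F : occ (2 * k + 1) (ren od F) = occ k F.
Proof. unfold ren; induction F; cbn [occ subst]; [|lia]. unfold od in *.
  destruct (Nat.eqb_spec (2*k+1) (S (2*n))), (Nat.eqb_spec k n); lia. Qed.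

Fixpoint occL (n : nat) (l : list form) : nat :=
  match l with [] => 0 | A :: l' => occ n A + occL n l' end.

Lemma occL_app n l1 l2 : occL n (l1 ++ l2) = occL n l1 + occL n l2.
Proof. induction l1; simpl; lia. Qed.

Lemma occL_perm n l1 l2 : Permutation l1 l2 -> occL n l1 = occL n l2.
Proof. induction 1; simpl; lia. Qed.

Lemma occL_ev_ev k l : occL (2 * k) (map (ren ev) l) = occL k l.
Proof. induction l; cbn [occL map]; [|rewrite occ_ev_ev]; lia. Qed.
Lemma occL_ev_od k l : occL (2 * k) (map (ren od) l) = 0.
Proof. induction l; cbn [occL map]; [|rewrite occ_ev_od]; lia. Qed.
Lemma occL_od_ev k l : occL (2 * k + 1) (map (ren ev) l) = 0.
Proof. induction l; cbn [occL map]; [|rewrite occ_od_ev]; lia. Qed.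
Lemma occL_od_od k l : occL (2 * k + 1) (map (ren od) l) = occL k l.
Proof. induction l; cbn [occL map]; [|rewrite occ_od_od]; lia. Qed.

Lemma parity m : (exists k, m = 2 * k) \/ (exists k, m = 2 * k + 1).
Proof. destruct (Nat.Even_or_Odd m) as [[k Hk]|[k Hk]]; eauto. Qed.

Lemma lin_form F : exists F0 s, (forall n, occ n F0 <= 1) /\ subst s F0 = F.
Proof.
  induction F as [n|A [A0 [sA [HA1 HA2]]] B [B0 [sB [HB1 HB2]]]].
  - exists (Var 0), (fun _ => Var n). split; [intro m; simpl; destruct (Nat.eqb m 0); lia|reflexivity].
  - exists (Imp (ren ev A0) (ren od B0)), (join sA sB). split.
    + intro m; simpl. destruct (parity m) as [[k ->]|[k ->]].
      * rewrite occ_ev_ev, occ_ev_od. specialize (HA1 k); lia.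
      * rewrite occ_od_ev, occ_od_od. specialize (HB1 k); lia.
    + simpl. rewrite subst_join_ev, subst_join_od. congruence.
Qed.

Lemma lin_list l : exists l0 s, (forall n, occL n l0 <= 1) /\ map (subst s) l0 = l.
Proof.
  induction l as [|F l [l0 [sl [H1 H2]]]].
  - exists [], (fun _ => Var 0). split; [intro; simpl; lia|reflexivity].
  - destruct (lin_form F) as [F0 [sF [HF1 HF2]]].
    exists (ren ev F0 :: map (ren od) l0), (join sF sl). split.
    + intro m; simpl. destruct (parity m) as [[k ->]|[k ->]].
      * rewrite occ_ev_ev, occL_ev_od. specialize (HF1 k); lia.
      * rewrite occ_od_ev, occL_od_od. specialize (H1 k); lia.
    + simpl. rewrite subst_join_ev, map_subst_join_od. congruence.
Qed.

Lemma eval_map_ren v r l : (forall A, In A (map (ren r) l) -> eval v A = true) ->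
  forall A, In A l -> eval (fun n => v (r n)) A = true.
Proof. intros H A HA. rewrite <- eval_ren. apply H. apply in_map. exact HA. Qed.

Lemma sound : forall G H, CL7 G H -> exists G' H' s,
  map (subst s) G' = G /\ subst s H' = H /\ (forall n, occL n G' + occ n H' <= 2) /\
  (forall v, (forall A, In A G' -> eval v A = true) -> eval v H' = true).
Proof.
  induction 1 as [G G' F HP | G E F _ IH | G D S E F H _ IH1 _ IH2 HP].
  - destruct (lin_form F) as [F0 [sF [HF1 HF2]]].
    destruct (lin_list G) as [G0 [sG [HG1 HG2]]].
    set (L := ren od F0 :: map (ren ev) G0).
    assert (HL : map (subst (join sG sF)) L = F :: G).
    { unfold L; simpl. rewrite subst_join_od, map_subst_join_ev. congruence. }
    rewrite <- HL in HP. destruct (Permutation_map_inv _ _ HP) as [L3 [HL3 HP3]].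
    exists L3, (ren od F0), (join sG sF). split; [auto|]. split; [rewrite subst_join_od; exact HF2|]. split.
    + intro m. rewrite <- (occL_perm m _ _ HP3). unfold L; simpl.
      destruct (parity m) as [[k ->]|[k ->]].
      * rewrite occ_ev_od, occL_ev_ev. specialize (HG1 k); lia.
      * rewrite occ_od_od, occL_od_ev. specialize (HF1 k); lia.
    + intros v Hv. apply Hv. eapply Permutation_in; [exact HP3|]. left; reflexivity.
  - destruct IH as [G1 [H1 [s [Hm [Hs [Ho Hv]]]]]].
    destruct G1 as [|E1 G1']; simpl in Hm; [discriminate|]. injection Hm as HE HG.
    exists G1', (Imp E1 H1), s. split; [auto|]. split; [simpl; congruence|]. split.
    + intro n. specialize (Ho n). simpl in *. lia.
    + intros v Hv'. simpl. destruct (eval v E1) eqn:He; [|reflexivity]. simpl.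
      apply Hv. intros A [<-|HA]; auto.
  - destruct IH1 as [G1 [H1 [s1 [Hm1 [Hs1 [Ho1 Hv1]]]]]].
    destruct IH2 as [D2 [E2 [s2 [Hm2 [Hs2 [Ho2 Hv2]]]]]].
    destruct G1 as [|F1 G1']; simpl in Hm1; [discriminate|]. injection Hm1 as HF HG.
    set (L := Imp (ren od E2) (ren ev F1) :: map (ren ev) G1' ++ map (ren od) D2).
    assert (HL : map (subst (join s1 s2)) L = Imp E F :: G ++ D).
    { unfold L; simpl. rewrite map_app, subst_join_od, subst_join_ev, map_subst_join_ev,
        map_subst_join_od. congruence. }
    rewrite <- HL in HP. destruct (Permutation_map_inv _ _ HP) as [L3 [HL3 HP3]].
    exists L3, (ren ev H1), (join s1 s2). split; [auto|]. split; [rewrite subst_join_ev; auto|]. split.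
    + intro m. rewrite <- (occL_perm m _ _ HP3). unfold L; simpl. rewrite occL_app.
      destruct (parity m) as [[k ->]|[k ->]].
      * rewrite occ_ev_od, occ_ev_ev, occL_ev_ev, occL_ev_od, occ_ev_ev.
        specialize (Ho1 k); simpl in Ho1; lia.
      * rewrite occ_od_od, occ_od_ev, occL_od_ev, occL_od_od, occ_od_ev.
        specialize (Ho2 k); lia.
    + intros v Hv. assert (HvL : forall A, In A L -> eval v A = true).
      { intros A HA. apply Hv. eapply Permutation_in; eauto. }
      rewrite eval_ren. apply Hv1.
      assert (HE2 : eval v (ren od E2) = true).
      { rewrite eval_ren. apply Hv2. apply (eval_map_ren v od D2).
        intros A HA. apply HvL. unfold L; right. apply in_or_app; right; exact HA. }
      intros A [<-|HA].
      * rewrite <- eval_ren. specialize (HvL _ (or_introl eq_refl)). simpl in HvL.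
        rewrite HE2 in HvL. exact HvL.
      * apply (eval_map_ren v ev G1'); [|exact HA].
        intros B HB. apply HvL. unfold L; right. apply in_or_app; left; exact HB.
Qed.
Fixpoint head (F : form) : nat := match F with Var n => n | Imp _ B => head B end.
Fixpoint size (F : form) : nat := match F with Var _ => 1 | Imp A B => S (size A + size B) end.
Fixpoint sizeL (l : list form) : nat := match l with [] => 0 | A :: l' => size A + sizeL l' end.

Lemma size_pos F : size F >= 1.
Proof. destruct F; simpl; lia. Qed.
Lemma sizeL_app l1 l2 : sizeL (l1 ++ l2) = sizeL l1 + sizeL l2.
Proof. induction l1; simpl; lia. Qed.
Lemma sizeL_perm l1 l2 : Permutation l1 l2 -> sizeL l1 = sizeL l2.
Proof. induction 1; simpl; lia. Qed.

Lemma occ_head F : occ (head F) F >= 1.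
Proof. induction F; simpl; [rewrite Nat.eqb_refl|]; lia. Qed.
Lemma eval_head v F : v (head F) = true -> eval v F = true.
Proof. induction F; simpl; auto. intro H. rewrite IHF2 by auto. destruct (eval v F1); auto. Qed.
Lemma eval_agree v w F : (forall n, occ n F > 0 -> v n = w n) -> eval v F = eval w F.
Proof.
  induction F; simpl; intro H.
  - apply H. rewrite Nat.eqb_refl. lia.
  - rewrite IHF1, IHF2; auto; intros n Hn; apply H; lia.
Qed.
Lemma occ_in n A l : In A l -> occ n A <= occL n l.
Proof. induction l; simpl; [tauto|]. intros [<-|H]; [lia|]. specialize (IHl H); lia. Qed.

Definition Sep (D R T1 T2 : list form) : Prop :=
  (forall G, In G D -> occL (head G) (R ++ T2) = 0) /\
  (forall G, In G R -> occL (head G) (D ++ T1) = 0).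

Lemma Sep_sym D R T1 T2 : Sep D R T1 T2 -> Sep R D T2 T1.
Proof. unfold Sep; tauto. Qed.

Lemma Sep_add D R T1 T2 G : Sep D R (G :: T1) T2 -> occL (head G) (R ++ T2) = 0 ->
  Sep (G :: D) R T1 T2.
Proof.
  intros [H1 H2] H. split.
  - intros G' [<-|HG']; auto.
  - intros G' HG'. specialize (H2 _ HG'). rewrite occL_app in *. simpl in *. lia.
Qed.

Lemma Sep_merge D1 D2 R T1 T2 G G' : Sep (D1 ++ Imp G G' :: D2) R T1 T2 ->
  occL (head G) (R ++ T2) = 0 -> Sep (G :: G' :: D1 ++ D2) R T1 T2.
Proof.
  intros [H1 H2] H. split.
  - intros G'' [<-|[<-|HG'']]; auto.
    + apply (H1 (Imp G G')). apply in_or_app; right; left; reflexivity.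
    + apply H1. apply in_app_or in HG''. apply in_or_app. destruct HG''; [left|right;right]; auto.
  - intros G'' HG''. specialize (H2 _ HG''). rewrite !occL_app in *. simpl in *. rewrite !occL_app in *. lia.
Qed.

Lemma split_occ n l : occL n l > 0 -> exists X G Y, l = X ++ G :: Y /\ occ n G > 0.
Proof.
  induction l as [|A l IH]; simpl; [lia|]. intro H.
  destruct (Nat.eq_dec (occ n A) 0).
  - destruct IH as [X [G [Y [-> HG]]]]; [lia|]. exists (A :: X), G, Y; auto.
  - exists [], A, l. split; auto. lia.
Qed.

Lemma part : forall len l T1 T2, length l <= len ->
  (forall n, occL n (l ++ T1 ++ T2) <= 2) ->
  exists D R, Permutation l (D ++ R) /\ Sep D R T1 T2.
Proof.
  induction len as [|len IH]; intros l T1 T2 Hlen Hb.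
  - destruct l; simpl in Hlen; [|lia]. exists [], []. split; [constructor|].
    split; simpl; tauto.
  - destruct l as [|G l'].
    + exists [], []. split; [constructor|]. split; simpl; tauto.
    + set (h := head G). pose proof (occ_head G) as HhG. fold h in HhG.
      assert (Hbh := Hb h). simpl in Hbh. rewrite !occL_app in Hbh.
      simpl in Hlen.
      destruct (Nat.eq_dec (occL h l') 0) as [Hl0|Hl0].
      * destruct (Nat.eq_dec (occL h T2) 0) as [HT0|HT0].
        -- destruct (IH l' (G :: T1) T2) as [D [R [HP HS]]]; [lia| |].
           { intro n. specialize (Hb n). simpl in *. rewrite !occL_app in *. simpl in *. rewrite ?occL_app in *. lia. }
           exists (G :: D), R. split; [constructor; auto|].
           apply Sep_add; auto. pose proof (occL_perm h _ _ HP) as HPh. unfold h in *. rewrite !occL_app in *. lia.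
        -- destruct (IH l' T1 (G :: T2)) as [D [R [HP HS]]]; [lia| |].
           { intro n. specialize (Hb n). simpl in *. rewrite !occL_app in *. simpl in *. rewrite ?occL_app in *. lia. }
           exists D, (G :: R). split.
           { eapply perm_trans; [apply perm_skip; exact HP|]. apply Permutation_middle. }
           apply Sep_sym, Sep_add; [apply Sep_sym; auto|]. pose proof (occL_perm h _ _ HP) as HPh. unfold h in *. rewrite !occL_app in *. lia.
      * destruct (split_occ h l') as [X [G' [Y [-> HG']]]]; [lia|].
        destruct (IH (X ++ Imp G G' :: Y) T1 T2) as [D [R [HP HS]]].
        { rewrite length_app in *. simpl in *. lia. }
        { intro n. specialize (Hb n). simpl in *. rewrite !occL_app in *. simpl in *. rewrite ?occL_app in *. lia. }
        assert (HK : In (Imp G G') (D ++ R)).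
        { eapply Permutation_in; [exact HP|]. apply in_or_app; right; left; reflexivity. }
        assert (Hocc : forall n, occL n (X ++ Y) = occL n X + occL n Y) by (intro; apply occL_app).
        apply in_app_or in HK. destruct HK as [HK|HK]; apply in_split in HK as [D1 [D2 ->]].
        -- exists (G :: G' :: D1 ++ D2), R. split.
           ++ apply perm_skip. eapply perm_trans; [apply Permutation_sym, Permutation_middle|].
              apply perm_skip. change (Permutation (X ++ Y) ((D1 ++ D2) ++ R)).
              rewrite <- app_assoc in HP |- *. simpl in HP.
              apply (Permutation_app_inv _ _ _ _ _ HP).
           ++ apply Sep_merge; auto. pose proof (occL_perm h _ _ HP) as HPh. unfold h in *. rewrite !occL_app in *. simpl in *. rewrite ?occL_app in *. lia.
        -- exists D, (G :: G' :: D1 ++ D2). split.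
           ++ assert (H1 : Permutation (X ++ Y) ((D ++ D1) ++ D2)).
              { apply Permutation_app_inv with (a := Imp G G'). rewrite <- app_assoc. exact HP. }
              apply perm_trans with (l' := G :: G' :: X ++ Y).
              { apply perm_skip. apply Permutation_sym, Permutation_middle. }
              apply perm_trans with (l' := G :: G' :: (D ++ D1) ++ D2).
              { do 2 apply perm_skip. exact H1. }
              rewrite <- app_assoc.
              eapply perm_trans; [apply perm_skip; apply (Permutation_middle D (D1++D2) G')|].
              apply (Permutation_middle D (G' :: D1 ++ D2) G).
           ++ apply Sep_sym, Sep_merge; [apply Sep_sym; auto|]. pose proof (occL_perm h _ _ HP) as HPh. unfold h in *. rewrite !occL_app in *. simpl in *. rewrite ?occL_app in *. lia.
Qed.

Lemma comp : forall N G H, sizeL G + size H <= N ->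
  (forall n, occL n G + occ n H <= 2) ->
  (forall v, (forall A, In A G -> eval v A = true) -> eval v H = true) -> CL7 G H.
Proof.
  induction N as [|N IH]; intros G H Hs Hb Hv.
  { pose proof (size_pos H); lia. }
  destruct H as [p|A B].
  2:{ apply CL7_R. apply IH.
      - simpl in *. lia.
      - intro n. specialize (Hb n). simpl in *. lia.
      - intros v Hv'. specialize (Hv v). simpl in Hv.
        assert (HA : eval v A = true) by (apply Hv'; left; reflexivity).
        rewrite HA in Hv. apply Hv. intros A' HA'. apply Hv'. right; exact HA'. }
  destruct (classic (exists C, In C G /\ head C = p)) as [[C [HC Hh]]|Hno].
  2:{ exfalso. assert (E := Hv (fun n => negb (Nat.eqb n p))). simpl in E.
      rewrite Nat.eqb_refl in E. simpl in E. discriminate E.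
      intros A HA. apply eval_head. destruct (Nat.eqb_spec (head A) p); [|reflexivity].
      exfalso; apply Hno; eauto. }
  apply in_split in HC as [G1 [G2 ->]].
  set (Gp := G1 ++ G2).
  assert (HPG : Permutation (G1 ++ C :: G2) (C :: Gp)) by (apply Permutation_sym, Permutation_middle).
  destruct C as [q|B1 R].
  { simpl in Hh; subst q. apply CL7_ax with (G := Gp). exact HPG. }
  simpl in Hh.
  assert (Hbin : forall n, occL n (Gp ++ [B1] ++ [R; Var p]) <= 2).
  { intro n. specialize (Hb n). rewrite (occL_perm n _ _ HPG) in Hb.
    rewrite !occL_app. simpl in *. lia. }
  destruct (part (length Gp) Gp [B1] [R; Var p] (le_n _) Hbin) as [D [Rr [HP [HS1 HS2]]]].
  assert (HoccP : forall n, occL n Gp = occL n D + occL n Rr).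
  { intro n. rewrite (occL_perm n _ _ HP). apply occL_app. }
  assert (HsP : sizeL Gp = sizeL D + sizeL Rr).
  { rewrite (sizeL_perm _ _ HP). apply sizeL_app. }
  assert (HsG : sizeL (G1 ++ Imp B1 R :: G2) = S (size B1 + size R) + sizeL Gp).
  { rewrite (sizeL_perm _ _ HPG). reflexivity. }
  assert (HbG : forall n, occL n (G1 ++ Imp B1 R :: G2) = occ n B1 + occ n R + occL n Gp).
  { intro n. rewrite (occL_perm n _ _ HPG). simpl. lia. }
  assert (Hp : occL p Gp = 0 /\ occ p B1 = 0).
  { specialize (Hb p). rewrite HbG in Hb. pose proof (occ_head R) as HR. rewrite Hh in HR.
    simpl in Hb. rewrite Nat.eqb_refl in Hb. lia. }
  destruct Hp as [HpG HpB].
  assert (HinG : forall A, In A (G1 ++ Imp B1 R :: G2) <-> A = Imp B1 R \/ In A D \/ In A Rr).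
  { intro A. split; intro HA.
    - apply (Permutation_in _ HPG) in HA. destruct HA as [<-|HA]; [auto|].
      apply (Permutation_in _ HP) in HA. apply in_app_or in HA. tauto.
    - apply (Permutation_in _ (Permutation_sym HPG)).
      destruct HA as [<-|[HA|HA]]; [left; reflexivity|right; apply (Permutation_in _ (Permutation_sym HP));
      apply in_or_app; auto..]. }
  eapply CL7_L with (G := Rr) (D := D) (E := B1) (F := R).
  - apply IH.
    + simpl in *. pose proof (size_pos B1). lia.
    + intro n. specialize (Hb n). rewrite HbG, HoccP in Hb. simpl in *. lia.
    + intro v. apply NNPP. intro Hn.
      apply imply_to_and in Hn as [Hall Hf].
      set (v' := fun n => if Nat.ltb 0 (occL n (Rr ++ [R; Var p])) then v n else true).
      assert (Hag : forall X, (forall n, occ n X > 0 -> occL n (Rr ++ [R; Var p]) > 0) ->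
                 eval v' X = eval v X).
      { intros X HX. apply eval_agree. intros n Hn. unfold v'.
        specialize (HX n Hn). destruct (Nat.ltb_spec 0 (occL n (Rr ++ [R; Var p]))); lia || reflexivity. }
      apply Hf. rewrite <- (Hag (Var p)).
      2:{ intros n Hn. rewrite occL_app. simpl in *. lia. }
      apply Hv. intros A HA. apply HinG in HA as [->|[HA|HA]].
      * simpl. rewrite (Hag R).
        { rewrite (Hall R (or_introl eq_refl)). destruct (eval v' B1); reflexivity. }
        intros n Hn. rewrite occL_app. simpl. lia.
      * apply eval_head. unfold v'. rewrite (HS1 A HA). reflexivity.
      * rewrite Hag. { apply Hall. right; exact HA. }
        intros n Hn. rewrite occL_app. pose proof (occ_in n A Rr HA). lia.
  - apply IH.
    + pose proof (size_pos R). lia.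
    + intro n. specialize (Hb n). rewrite HbG, HoccP in Hb. simpl in *. lia.
    + intro v. apply NNPP. intro Hn.
      apply imply_to_and in Hn as [Hall Hf].
      set (v' := fun n => if Nat.ltb 0 (occL n (D ++ [B1])) then v n else negb (Nat.eqb n p)).
      assert (Hag : forall X, (forall n, occ n X > 0 -> occL n (D ++ [B1]) > 0) ->
                 eval v' X = eval v X).
      { intros X HX. apply eval_agree. intros n Hn. unfold v'.
        specialize (HX n Hn). destruct (Nat.ltb_spec 0 (occL n (D ++ [B1]))); lia || reflexivity. }
      assert (Hvp : v' p = false).
      { unfold v'. rewrite occL_app. simpl. rewrite HpB.
        replace (occL p D) with 0 by (specialize (HoccP p); lia). simpl. rewrite Nat.eqb_refl. reflexivity. }
      assert (E : eval v' (Var p) = true).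
      { apply Hv. intros A HA. apply HinG in HA as [->|[HA|HA]].
        - simpl. rewrite (Hag B1).
          { destruct (eval v B1) eqn:EB; [exfalso; apply Hf; reflexivity|reflexivity]. }
          intros n Hn. rewrite occL_app. simpl. lia.
        - rewrite Hag. { apply Hall; exact HA. }
          intros n Hn. rewrite occL_app. pose proof (occ_in n A D HA). lia.
        - apply eval_head. unfold v'. rewrite (HS2 A HA). simpl.
          destruct (Nat.eqb_spec (head A) p); [|reflexivity]. exfalso.
          pose proof (occ_in p A Rr HA). pose proof (occ_head A). rewrite e in *.
          specialize (HoccP p). lia. }
      simpl in E. rewrite Hvp in E. discriminate.
  - eapply perm_trans; [exact HPG|]. apply perm_skip.
    eapply perm_trans; [exact HP|]. apply Permutation_app_comm.
Qed.

Lemma subst_closed s : forall G H, CL7 G H -> CL7 (map (subst s) G) (subst s H).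
Proof.
  induction 1 as [G G' F HP | G E F _ IH | G D S E F H _ IH1 _ IH2 HP].
  - apply CL7_ax with (G := map (subst s) G). apply (Permutation_map (subst s)) in HP. exact HP.
  - simpl. apply CL7_R. exact IH.
  - apply CL7_L with (G := map (subst s) G) (D := map (subst s) D) (E := subst s E) (F := subst s F).
    + exact IH1.
    + exact IH2.
    + apply (Permutation_map (subst s)) in HP. simpl in HP. rewrite map_app in HP. exact HP.
Qed.

Theorem theorem2p1 : forall H : form,
  provable H <->
  exists (F : form) (s : nat -> form), binary F /\ tautology F /\ subst s F = H.
Proof.
  intro H. split.
  - intro HP. destruct (sound _ _ HP) as [G' [H' [s [Hm [Hs [Ho Hv]]]]]].
    destruct G' as [|A G']; [|discriminate].
    exists H', s. split; [|split; auto].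
    + intro n. specialize (Ho n). simpl in Ho. exact Ho.
    + intro v. apply Hv. intros A [].
  - intros [F [s [Hb [Ht <-]]]]. unfold provable.
    apply (subst_closed s [] F). apply (comp (size F)).
    + simpl. lia.
    + intro n. simpl. apply Hb.
    + intros v _. apply Ht.
Qed.
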